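(* Let $L\subseteq B_i$ be an SINR-feasible set of links contained in a single bucket $B_i$. Then there is a constant $C$ depending only on $\alpha,\beta,\varepsilon$ such that for every $e\in B_i$, \[\sum_{\{e'\in L: d_{e'}\ge d_e\}}\bar a_{e'}(e)\;\le\;\bar a_L(e)+\bar a_e(e)\;\le\;C.\]
   Context: Constants: $\alpha\ge0$, $N>0$, $\beta>0$. Nodes lie in the Euclidean plane. A link is $e=(s_e,r_e,P_e)$ with transmitter, receiver, power $P_e>0$; $\mathcal{L}$ is the set of links. $d_e=d(s_e,r_e)$, $d_{e'e}=d(s_{e'},r_e)$, $S_e=P_e/d_e^\alpha$, $S_{e'e}=P_{e'}/d_{e'e}^\alpha$, $\gamma_e=\beta S_e/(S_e-\beta N)$. Affectances: $\hat a_{e'}(e)=S_{e'e}/S_e$, $a_{e'}(e)=\gamma_e\hat a_{e'}(e)$, $\bar a_{e'}(e)=\min\{1,a_{e'}(e)\}$, and $\bar a_L(e)=\sum_{e'\in L\setminus\{e\}}\bar a_{e'}(e)$. $L$ is SINR-feasible if $S_e/(N+\sum_{e'\in L\setminus\{e\}}S_{e'e})\ge\beta$ for all $e\in L$ (equivalently $\sum_{e'\in L\setminus\{e\}}a_{e'}(e)\le1$). Buckets: $S_{\min}=\min_{e\in\mathcal{L}}S_e$, $B_i=\{e\in\mathcal{L}:2^iS_{\min}\le S_e<2^{i+1}S_{\min}\}$. Standing assumption: there is a constant $\varepsilon>0$ with $S_e/N\ge(1+\varepsilon)\beta$ for all $e\in\mathcal{L}$. *)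

(* Defs.v *)
From HB Require Import structures.
From mathcomp Require Import all_boot all_order all_algebra.
From mathcomp Require Import reals exp.
Set Implicit Arguments. Unset Strict Implicit. Unset Printing Implicit Defensive.
Import Order.TTheory GRing.Theory Num.Theory.
Local Open Scope ring_scope.

Section SINR.
Variable R : realType.

Definition point := (R * R)%type.
Definition dist (p q : point) : R :=
  Num.sqrt ((p.1 - q.1) ^+ 2 + (p.2 - q.2) ^+ 2).

Definition link := (point * point * R)%type.
Definition sender (e : link) : point := e.1.1.
Definition receiver (e : link) : point := e.1.2.
Definition power (e : link) : R := e.2.

Variables (alpha beta N : R).

Definition d (e : link) : R := dist (sender e) (receiver e).
Definition dcross (e' e : link) : R := dist (sender e') (receiver e).
Definition S (e : link) : R := power e / (d e `^ alpha).
Definition Scross (e' e : link) : R := power e' / (dcross e' e `^ alpha).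
Definition gamma (e : link) : R := beta * S e / (S e - beta * N).

Definition ahat (e' e : link) : R := Scross e' e / S e.
Definition aff (e' e : link) : R := gamma e * ahat e' e.
Definition abar (e' e : link) : R := Num.min 1 (aff e' e).
Definition abarL (L : seq link) (e : link) : R :=
  \sum_(e' <- L | e' != e) abar e' e.

Definition feasible (L : seq link) : Prop :=
  forall e, e \in L ->
    beta <= S e / (N + \sum_(e' <- L | e' != e) Scross e' e).

Definition link0 : link := ((0, 0), (0, 0), 0).
Definition Smin (Lall : seq link) : R :=
  foldr (fun e m => Num.min (S e) m) (S (head link0 Lall)) Lall.

Definition in_bucket (Lall : seq link) (i : nat) (e : link) : bool :=
  [&& e \in Lall, 2 ^+ i * Smin Lall <= S e & S e < 2 ^+ i.+1 * Smin Lall].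

End SINR.

(* Main.v *)
Require Import Defs.
From HB Require Import structures.
From mathcomp Require Import all_boot all_order all_algebra.
From mathcomp Require Import reals exp.
From mathcomp Require Import ring lra.
Import Order.TTheory GRing.Theory Num.Theory.
Local Open Scope ring_scope.

Section H.
Variable R : realType.

Lemma dist_ge0 (p q : point R) : 0 <= dist p q.
Proof. exact: sqrtr_ge0. Qed.

Lemma dist_sym (p q : point R) : dist p q = dist q p.
Proof. by rewrite /dist -(sqrrN (p.1 - q.1)) -(sqrrN (p.2 - q.2)) !opprB. Qed.

Lemma dist_tri (p m q : point R) : dist p q <= dist p m + dist m q.
Proof.
have ha := dist_ge0 p m; have hb := dist_ge0 m q.
have ea : dist p m ^+ 2 = (p.1 - m.1) ^+ 2 + (p.2 - m.2) ^+ 2.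
  by rewrite sqr_sqrtr // addr_ge0 // sqr_ge0.
have eb : dist m q ^+ 2 = (m.1 - q.1) ^+ 2 + (m.2 - q.2) ^+ 2.
  by rewrite sqr_sqrtr // addr_ge0 // sqr_ge0.
set a := dist p m in ha ea *; set b := dist m q in hb eb *.
rewrite /dist -(ger0_norm (addr_ge0 ha hb)) -sqrtr_sqr ler_sqrt ?sqr_ge0 //.
set u1 := p.1 - m.1 in ea *; set u2 := p.2 - m.2 in ea *.
set v1 := m.1 - q.1 in eb *; set v2 := m.2 - q.2 in eb *.
have -> : p.1 - q.1 = u1 + v1 by rewrite /u1 /v1; ring.
have -> : p.2 - q.2 = u2 + v2 by rewrite /u2 /v2; ring.
have h1 : (u1 * v1 + u2 * v2) ^+ 2 <= (a * b) ^+ 2.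
  rewrite exprMn ea eb -subr_ge0.
  have -> : ((u1 ^+ 2 + u2 ^+ 2) * (v1 ^+ 2 + v2 ^+ 2) - (u1 * v1 + u2 * v2) ^+ 2)
     = (u1 * v2 - u2 * v1) ^+ 2 by ring.
  exact: sqr_ge0.
have h2 : u1 * v1 + u2 * v2 <= a * b.
  have hab : 0 <= a * b by rewrite mulr_ge0.
  case: (lerP (u1 * v1 + u2 * v2) 0) => hn; first lra.
  by rewrite -(ler_pXn2r (n:=2)) // nnegrE ltW.
have -> : (u1 + v1) ^+ 2 + (u2 + v2) ^+ 2 = a ^+ 2 + b ^+ 2 + 2 * (u1 * v1 + u2 * v2).
  by rewrite ea eb; ring.
have -> : (a + b) ^+ 2 = a ^+ 2 + b ^+ 2 + 2 * (a * b) by ring.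
lra.
Qed.

Lemma seq_argmin (T : eqType) (phi : T -> R) (s : seq T) x0 :
  x0 \in s -> exists2 f, f \in s & forall x, x \in s -> phi f <= phi x.
Proof.
elim: s x0 => // a s IH x0 _.
case: s IH => [|b s'] IH.
  exists a; first exact: mem_head.
  by move=> x; rewrite inE => /eqP ->.
have [f fin fmin] := IH b (mem_head _ _).
case: (lerP (phi a) (phi f)) => haf.
  exists a; first exact: mem_head.
  move=> x; rewrite inE => /orP[/eqP -> //|/fmin]; exact: le_trans.
exists f; first by rewrite inE fin orbT.
move=> x; rewrite inE => /orP[/eqP -> |/fmin //]; exact: ltW.
Qed.

Lemma pow_anti (alpha P a b : R) : 0 <= alpha -> 0 <= P -> 0 < a -> a <= b ->
  P / b `^ alpha <= P / a `^ alpha.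
Proof.
move=> ha hP h0 hab; apply: ler_wpM2l => //.
have hb : 0 < b by exact: lt_le_trans hab.
rewrite lef_pV2 ?posrE ?powR_gt0 //.
apply: ge0_ler_powR => //; by rewrite nnegrE ltW.
Qed.

End H.
Arguments dist_tri {R}. Arguments dist_sym {R}. Arguments pow_anti {R}.

Theorem theorem1 (R : realType) (alpha beta eps : R) :
  0 <= alpha -> 0 < beta -> 0 < eps ->
  exists C : R,
    forall (N : R) (Lall L : seq (link R)) (i : nat) (e : link R),
      0 < N ->
      uniq Lall ->
      (forall f, f \in Lall -> 0 < power f) ->
      (forall f f', f \in Lall -> f' \in Lall -> 0 < dcross f' f) ->
      (forall f, f \in Lall -> (1 + eps) * beta <= S alpha f / N) ->
      uniq L ->
      {subset L <= in_bucket alpha Lall i} ->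
      feasible alpha beta N L ->
      in_bucket alpha Lall i e ->
      \sum_(e' <- L | d e <= d e') abar alpha beta N e' e
        <= abarL alpha beta N L e + abar alpha beta N e e
      /\ abarL alpha beta N L e + abar alpha beta N e e <= C.
Proof.
move=> ha hb he.
pose K := beta * (1 + eps) / eps.
have K0 : 0 <= K by rewrite /K; apply: divr_ge0; [apply: mulr_ge0|]; lra.
have p30 : 0 < 3 `^ alpha :> R by rewrite powR_gt0.
pose M := 2 * 3 `^ alpha * (K + 1).
have M0 : 0 <= M by rewrite /M; apply: mulr_ge0; [apply: mulr_ge0|]; lra.
exists (2 + M / beta).
move=> N Lall L i e hN uLall hP hD hS uL sub feas eB.
have inB : forall f, in_bucket alpha Lall i f -> f \in Lall.
  by move=> f /and3P[].
have eLall := inB e eB.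
have Lsub : forall f, f \in L -> f \in Lall by move=> f /sub /inB.
have Spos : forall f, f \in Lall -> 0 < S alpha f.
  move=> f fL; rewrite /S divr_gt0 ?hP // powR_gt0 //; exact: (hD f f).
have SbN : forall f, f \in Lall -> (1 + eps) * beta * N <= S alpha f.
  by move=> f fL; rewrite -ler_pdivlMr // hS.
have ratio : forall f g, in_bucket alpha Lall i f -> in_bucket alpha Lall i g ->
    S alpha f <= 2 * S alpha g.
  move=> f g /and3P[_ _ hf] /and3P[_ hg _].
  apply: ltW; apply: (lt_le_trans hf).
  by rewrite exprS -mulrA ler_wpM2l.
have Sc0 : forall f g, f \in Lall -> 0 <= Scross alpha f g.
  by move=> f g fL; rewrite /Scross divr_ge0 ?powR_ge0 // ltW // hP.
have Se := Spos e eLall.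
have SbNe := SbN e eLall.
have gpos : 0 < S alpha e - beta * N.
  have : beta * N < (1 + eps) * beta * N.
    by rewrite -mulrA ltr_pMl ?mulr_gt0 // ltrDl.
  lra.
have g0 : 0 <= gamma alpha beta N e.
  rewrite /gamma; apply: divr_ge0; [apply: mulr_ge0|]; lra.
have gK : gamma alpha beta N e <= K.
  rewrite /gamma /K ler_pdivrMr // mulrAC ler_pdivlMr //.
  have h1 : 0 <= beta * (S alpha e - (1 + eps) * beta * N).
    by apply: mulr_ge0; lra.
  have -> : beta * (1 + eps) * (S alpha e - beta * N) =
     beta * S alpha e * eps + beta * (S alpha e - (1 + eps) * beta * N) by ring.
  lra.
have ab0 : forall f, f \in Lall -> 0 <= abar alpha beta N f e.
  move=> f fL; rewrite /abar le_min ler01 /= /aff /ahat.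
  by rewrite mulr_ge0 // divr_ge0 ?Sc0 // ltW.
have ab1 : forall f, abar alpha beta N f e <= 1.
  by move=> f; rewrite /abar ge_min lexx.
have feasb : forall f, f \in L ->
    \sum_(e' <- L | e' != f) Scross alpha e' f <= S alpha f / beta.
  move=> f fL; have := feas f fL.
  have s0 : 0 <= \sum_(e' <- L | e' != f) Scross alpha e' f.
    rewrite big_seq_cond; apply: sumr_ge0 => x /andP[xL _]; exact: Sc0 (Lsub x xL).
  rewrite (ler_pdivlMr _ _ (_ : 0 < N + _)); last by lra.
  rewrite (ler_pdivlMr _ _ hb) => h; nra.
split.
  apply: (le_trans (_ : _ <= \sum_(e' <- L) abar alpha beta N e' e)).
    rewrite [X in _ <= X](bigID (fun e' => d e <= d e')) /= lerDl.
    rewrite big_seq_cond; apply: sumr_ge0 => x /andP[xL _]; exact: ab0 (Lsub x xL).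
  case eL: (e \in L).
    by rewrite (bigD1_seq e) //= /abarL addrC.
  rewrite /abarL.
  have -> : \sum_(e' <- L) abar alpha beta N e' e =
            \sum_(e' <- L | e' != e) abar alpha beta N e' e.
    rewrite big_seq_cond [RHS]big_seq_cond; apply: eq_bigl => x.
    case xL: (x \in L) => //=.
    by apply/esym/eqP => xe; rewrite -xe xL in eL.
  by rewrite lerDl ab0.
have [->|[f0 Lf0]] : L = [::] \/ exists f0, f0 \in L.
  by case: (L) => [|a l]; [left|right; exists a; exact: mem_head].
  rewrite /abarL big_nil add0r; have := ab1 e.
  have : 0 <= M / beta by rewrite divr_ge0 // ltW.
  lra.
have [f fL fmin] := @seq_argmin R _ (fun x => dcross x e + d x) _ _ Lf0.
have fA := Lsub f fL.
have Sf := Spos f fA.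
have pw : forall e', e' \in L -> abar alpha beta N e' e <= M * (Scross alpha e' f / S alpha f).
  move=> e' e'L.
  have e'A := Lsub e' e'L.
  have D'0 : 0 < dcross e' e := hD e e' eLall e'A.
  have T0 : 0 < dcross e' f := hD f e' fA e'A.
  have dd0 : 0 < d e' := hD e' e' e'A e'A.
  have Pp := hP e' e'A.
  have hT : dcross e' f <= dcross e' e + dcross f e + d f.
    rewrite /dcross; apply: le_trans (dist_tri (sender e') (receiver e) (receiver f)) _.
    rewrite -addrA lerD2l; apply: le_trans (dist_tri _ (sender f) _) _.
    by rewrite dist_sym.
  have hmin : dcross f e + d f <= dcross e' e + d e' := fmin e' e'L.
  have x0 : 0 <= Scross alpha e' f := Sc0 e' f e'A.
  case: (lerP (d e') (dcross e' e)) => hcase.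
    have hT3 : dcross e' f <= 3 * dcross e' e by lra.
    have h3 : Scross alpha e' e <= 3 `^ alpha * Scross alpha e' f.
      have h := pow_anti _ _ _ _ ha (ltW Pp) T0 hT3.
      rewrite (powRM _ (ler0n R 3) (ltW D'0)) in h.
      rewrite /Scross.
      have -> : power e' / dcross e' e `^ alpha =
          3 `^ alpha * (power e' / (3 `^ alpha * dcross e' e `^ alpha)).
        field; apply/andP; split; apply: lt0r_neq0 => //; exact: powR_gt0.
      by apply: ler_wpM2l; [exact: ltW | exact: h].
    rewrite /abar ge_min; apply/orP; right.
    rewrite /aff /ahat.
    have hinv : (S alpha e)^-1 <= 2 / S alpha f.
      rewrite ler_pdivlMr // mulrC ler_pdivrMr //.
      exact: ratio f e (sub f fL) eB.
    set x := Scross alpha e' f in x0 h3 *.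
    set y := 3 `^ alpha * x.
    have y0 : 0 <= y by rewrite mulr_ge0 // ltW.
    have h1 : gamma alpha beta N e * (Scross alpha e' e / S alpha e) <= K * (y / S alpha e).
      apply: ler_pM => //; first by rewrite divr_ge0 ?Sc0 // ltW.
      by apply: ler_wpM2r => //; rewrite invr_ge0 ltW.
    have h2 : y / S alpha e <= y * (2 / S alpha f) by apply: ler_wpM2l.
    have -> : M * (x / S alpha f) = (K + 1) * (y * (2 / S alpha f)) by rewrite /M /y; ring.
    set a := y / S alpha e in h1 h2 *; set b := y * (2 / S alpha f) in h2 *.
    have b0 : 0 <= b by rewrite /b mulr_ge0 // divr_ge0 // ltW.
    nra.
  have hT3 : dcross e' f <= 3 * d e' by lra.
  have h := pow_anti _ _ _ _ ha (ltW Pp) T0 hT3.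
  rewrite (powRM _ (ler0n R 3) (ltW dd0)) in h.
  have hx : S alpha f <= 2 * 3 `^ alpha * Scross alpha e' f.
    apply: le_trans (ratio f e' (sub f fL) (sub e' e'L)) _.
    rewrite -mulrA ler_wpM2l //.
    have -> : S alpha e' = 3 `^ alpha * (power e' / (3 `^ alpha * d e' `^ alpha)).
      rewrite /S; field; apply/andP; split; apply: lt0r_neq0 => //; exact: powR_gt0.
    by apply: ler_wpM2l; [exact: ltW | exact: h].
  apply: le_trans (ab1 e') _.
  have -> : M * (Scross alpha e' f / S alpha f) =
     (K + 1) * (2 * 3 `^ alpha * Scross alpha e' f / S alpha f) by rewrite /M; ring.
  have : 1 <= 2 * 3 `^ alpha * Scross alpha e' f / S alpha f.
    by rewrite ler_pdivlMr // mul1r.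
  set b := _ / S alpha f; nra.
have hsum : abarL alpha beta N L e <=
    \sum_(e' <- L) (if e' == f then 1 else M * (Scross alpha e' f / S alpha f)).
  rewrite /abarL big_mkcond big_seq [X in _ <= X]big_seq; apply: ler_sum => x xL.
  case: ifP => _.
    case: ifP => [/eqP -> | _]; [exact: ab1 | exact: pw].
  case: ifP => _; first exact: ler01.
  by rewrite mulr_ge0 // divr_ge0 ?Sc0 ?Lsub // ltW.
rewrite (bigD1_seq f) //= eqxx in hsum.
have E : \sum_(i0 <- L | i0 != f)
    (if i0 == f then 1 else M * (Scross alpha i0 f / S alpha f)) =
    M * ((\sum_(i0 <- L | i0 != f) Scross alpha i0 f) / S alpha f).
  by rewrite mulr_suml mulr_sumr; apply: eq_bigr => x /negbTE ->.
rewrite E in hsum.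
have hq : (\sum_(i0 <- L | i0 != f) Scross alpha i0 f) / S alpha f <= beta^-1.
  by rewrite ler_pdivrMr // mulrC; exact: feasb.
have : M * ((\sum_(i0 <- L | i0 != f) Scross alpha i0 f) / S alpha f) <= M / beta.
  exact: ler_wpM2l.
have := ab1 e.
lra.
Qed.
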